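(* Assume $g$ satisfies (Hg), and let $a\in(0,1)$ and $k>0$. Define $$d^-(a):=\max_{y\in(a,1)}\frac{g(y;a)}{y},\qquad d^+(a,k):=\max_{y\in(1-a,1)}\frac{-g(1-y;a)}{ky}.$$ Then: (i) for every $d\in(0,d^+(a,k))$ we have $c(a,d,k)\ge 0$; (ii) for every $d\in(0,d^-(a))$ we have $c(a,d,k)\le 0$. In particular, if $0<d<\min\{d^-(a),d^+(a,k)\}$, then $c(a,d,k)=0$.
   Context: A function $g:\mathbb R\times[0,1]\to\mathbb R$, $(u,a)\mapsto g(u;a)$, satisfies (Hg) if it is $C^1$ and for every $a\in(0,1)$: $g(0;a)=g(a;a)=g(1;a)=0$, $g'(0;a)<0$, $g'(1;a)<0$, $g'(a;a)>0$ (where $g'=\partial_u g$), $g(v;a)>0$ for $v\in(-\infty,0)\cup(a,1)$ and $g(v;a)<0$ for $v\in(0,a)\cup(1,\infty)$. For $k>0$, $a\in(0,1)$, $d>0$ consider the traveling wave problem: find $c\in\mathbb R$ and $\Phi:\mathbb R\to\mathbb R$ with $$-c\Phi'(\xi)=d\big(k\Phi(\xi+1)-(k+1)\Phi(\xi)+\Phi(\xi-1)\big)+g(\Phi(\xi);a)\quad(\xi\in\mathbb R),\qquad \lim_{\xi\to-\infty}\Phi(\xi)=0,\ \lim_{\xi\to+\infty}\Phi(\xi)=1.$$ It is known (Mallet-Paret) that under (Hg) this problem has a solution with $\Phi$ non-decreasing and that the speed $c$ is uniquely determined; it is denoted $c(a,d,k)$. *)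

(* Defs.v *)
From Stdlib Require Import Reals Lra.
Open Scope R_scope.

Definition cont_on_Rx01 (f : R -> R -> R) : Prop :=
  forall u a, 0 <= a <= 1 -> forall eps, 0 < eps ->
    exists delta, 0 < delta /\
      forall u' a', 0 <= a' <= 1 -> Rabs (u' - u) < delta -> Rabs (a' - a) < delta ->
        Rabs (f u' a' - f u a) < eps.

Definition Hg (g : R -> R -> R) : Prop :=
  exists gu : R -> R -> R,
    cont_on_Rx01 g /\ cont_on_Rx01 gu /\
    (forall u a, 0 <= a <= 1 -> derivable_pt_lim (fun v => g v a) u (gu u a)) /\
    (forall a, 0 < a < 1 ->
       g 0 a = 0 /\ g a a = 0 /\ g 1 a = 0 /\
       gu 0 a < 0 /\ gu 1 a < 0 /\ 0 < gu a a /\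
       (forall v, (v < 0 \/ (a < v < 1)) -> 0 < g v a) /\
       (forall v, ((0 < v < a) \/ 1 < v) -> g v a < 0)).

Definition tw_rhs (g : R -> R -> R) (a d k : R) (Phi : R -> R) (xi : R) : R :=
  d * (k * Phi (xi + 1) - (k + 1) * Phi xi + Phi (xi - 1)) + g (Phi xi) a.

(* (c, Phi) is a non-decreasing traveling wave solution:
   -c Phi'(xi) = tw_rhs ... for all xi, Phi(-oo) = 0, Phi(+oo) = 1.
   When c = 0 the equation contains no derivative (Phi need not be
   differentiable); when c <> 0, Phi is differentiable everywhere. *)
Definition tw_solution (g : R -> R -> R) (a d k c : R) (Phi : R -> R) : Prop :=
  (forall x y, x <= y -> Phi x <= Phi y) /\
  ((forall xi, exists D, derivable_pt_lim Phi xi D /\ - c * D = tw_rhs g a d k Phi xi)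
   \/ (c = 0 /\ forall xi, 0 = tw_rhs g a d k Phi xi)) /\
  (forall eps, 0 < eps -> exists M, forall xi, xi <= M -> Rabs (Phi xi) < eps) /\
  (forall eps, 0 < eps -> exists M, forall xi, M <= xi -> Rabs (Phi xi - 1) < eps).

Definition is_max_on_open (f : R -> R) (lo hi m : R) : Prop :=
  (exists y, lo < y < hi /\ f y = m) /\ (forall y, lo < y < hi -> f y <= m).

(* Main.v *)
Require Import Defs.
From Stdlib Require Import Reals Lra.
Open Scope R_scope.

Lemma deriv_nonneg (f : R -> R) x D :
  (forall x y, x <= y -> f x <= f y) -> derivable_pt_lim f x D -> 0 <= D.
Proof.
  intros Hm HD. destruct (Rle_or_lt 0 D) as [h|h]; [exact h|].
  assert (e : 0 < - D / 2) by lra.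
  destruct (HD _ e) as [del Hdel].
  assert (hp : 0 < del / 2) by (destruct del; simpl; lra).
  assert (hne : del / 2 <> 0) by lra.
  assert (hlt : Rabs (del/2) < del) by (rewrite Rabs_pos_eq; destruct del; simpl in *; lra).
  specialize (Hdel _ hne hlt).
  assert (q : 0 <= (f (x + del/2) - f x) / (del/2)).
  { unfold Rdiv; apply Rmult_le_pos; [|left; apply Rinv_0_lt_compat; lra]. assert (f x <= f (x + del/2)) by (apply Hm; lra). lra. }
  apply Rabs_def2 in Hdel. lra.
Qed.

Lemma sol_facts g a d k c Phi : tw_solution g a d k c Phi ->
  (forall xi, 0 <= Phi xi <= 1) /\
  (forall y, 0 < y < 1 -> c <> 0 -> exists xi D, Phi xi = y /\ 0 <= D /\
       - c * D = tw_rhs g a d k Phi xi).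
Proof.
  intros [Hm [Heq [H0 H1]]].
  assert (Hb : forall xi, 0 <= Phi xi <= 1).
  { intro xi. split.
    - destruct (Rle_or_lt 0 (Phi xi)) as [h|h]; [exact h|].
      destruct (H0 (- Phi xi)) as [M HM]; [lra|].
      assert (hh := HM (Rmin xi M) (Rmin_r _ _)).
      assert (Phi (Rmin xi M) <= Phi xi) by (apply Hm, Rmin_l).
      apply Rabs_def2 in hh. lra.
    - destruct (Rle_or_lt (Phi xi) 1) as [h|h]; [exact h|].
      destruct (H1 (Phi xi - 1)) as [M HM]; [lra|].
      assert (hh := HM (Rmax xi M) (Rmax_r _ _)).
      assert (Phi xi <= Phi (Rmax xi M)) by (apply Hm, Rmax_l).
      apply Rabs_def2 in hh. lra. }
  split; [exact Hb|].
  intros y Hy Hc.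
  destruct Heq as [Hd|[Hc0 _]]; [|contradiction].
  assert (Hcont : continuity (fun xi => Phi xi - y)).
  { intro x. apply continuity_pt_minus; [|apply continuity_pt_const; intros ? ?; reflexivity].
    destruct (Hd x) as [D [HD _]].
    apply derivable_continuous_pt. exists D. exact HD. }
  destruct (H0 y) as [M1 HM1]; [lra|].
  destruct (H1 (1 - y)) as [M2 HM2]; [lra|].
  assert (a1 := HM1 M1 (Rle_refl _)).
  assert (a2 := HM2 (Rmax M2 (M1+1)) (Rmax_l _ _)).
  apply Rabs_def2 in a1. apply Rabs_def2 in a2.
  assert (hlt : M1 < Rmax M2 (M1+1)).
  { assert (M1 + 1 <= Rmax M2 (M1+1)) by apply Rmax_r. lra. }
  destruct (IVT _ _ _ Hcont hlt) as [z [_ Hz]]; [lra|lra|].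
  destruct (Hd z) as [D [HD HE]].
  exists z, D. split; [lra|]. split; [|exact HE].
  exact (deriv_nonneg Phi z D Hm HD).
Qed.

Theorem proposition2p3 (g : R -> R -> R) (a k dm dp : R) :
  Hg g -> 0 < a < 1 -> 0 < k ->
  is_max_on_open (fun y => g y a / y) a 1 dm ->
  is_max_on_open (fun y => - g (1 - y) a / (k * y)) (1 - a) 1 dp ->
  (forall d c Phi, 0 < d < dp -> tw_solution g a d k c Phi -> 0 <= c) /\
  (forall d c Phi, 0 < d < dm -> tw_solution g a d k c Phi -> c <= 0) /\
  (forall d c Phi, 0 < d < Rmin dm dp -> tw_solution g a d k c Phi -> c = 0).
Proof.
  intros _ Ha Hk [[ym [Hym Hfm]] _] [[yp [Hyp Hfp]] _].
  assert (P1 : forall d c Phi, 0 < d < dp -> tw_solution g a d k c Phi -> 0 <= c).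
  { intros d c Phi Hd Hs.
    destruct (Rle_or_lt 0 c) as [h|h]; [exact h|exfalso].
    destruct (sol_facts _ _ _ _ _ _ Hs) as [Hb Hex].
    destruct (Hex (1 - yp)) as [xi [D [HP [HD HE]]]]; [lra|lra|].
    assert (hk : 0 < k * yp) by nra.
    assert (Hg1 : - g (1 - yp) a > d * (k * yp)).
    { assert (- g (1 - yp) a / (k * yp) > d) by lra.
      apply (Rmult_lt_compat_r (k*yp)) in H; [|lra].
      unfold Rdiv in H. rewrite Rmult_assoc, Rinv_l in H; lra. }
    unfold tw_rhs in HE. rewrite HP in HE.
    assert (b1 := Hb (xi + 1)). assert (b2 := Hb (xi - 1)).
    assert (0 <= - c * D) by (apply Rmult_le_pos; lra).
    assert (m2 : Phi (xi - 1) <= Phi xi) by (destruct Hs as [Hm _]; apply Hm; lra).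
    rewrite HP in m2.
    assert (hdk : 0 < d * k) by (apply Rmult_lt_0_compat; lra).
    assert (e1 : d * k * (Phi (xi + 1) - (1 - yp)) <= d * k * yp)
      by (apply Rmult_le_compat_l; lra).
    assert (e2 : d * (Phi (xi - 1) - (1 - yp)) <= 0)
      by (assert (0 <= d * ((1 - yp) - Phi (xi - 1))) by (apply Rmult_le_pos; lra); lra).
    assert (E : d * (k * Phi (xi + 1) - (k + 1) * (1 - yp) + Phi (xi - 1))
       = d * k * (Phi (xi + 1) - (1 - yp)) + d * (Phi (xi - 1) - (1 - yp))) by ring.
    rewrite E in HE. assert (d * (k * yp) = d * k * yp) by ring. lra. }
  assert (P2 : forall d c Phi, 0 < d < dm -> tw_solution g a d k c Phi -> c <= 0).
  { intros d c Phi Hd Hs.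
    destruct (Rle_or_lt c 0) as [h|h]; [exact h|exfalso].
    destruct (sol_facts _ _ _ _ _ _ Hs) as [Hb Hex].
    destruct (Hex ym) as [xi [D [HP [HD HE]]]]; [lra|lra|].
    assert (Hg1 : g ym a > d * ym).
    { assert (g ym a / ym > d) by lra.
      apply (Rmult_lt_compat_r ym) in H; [|lra].
      unfold Rdiv in H. rewrite Rmult_assoc, Rinv_l in H; lra. }
    unfold tw_rhs in HE. rewrite HP in HE.
    assert (b1 := Hb (xi + 1)). assert (b2 := Hb (xi - 1)).
    assert (- c * D <= 0) by (assert (0 <= c * D) by (apply Rmult_le_pos; lra); lra).
    assert (m2 : Phi xi <= Phi (xi + 1)) by (destruct Hs as [Hm _]; apply Hm; lra).
    rewrite HP in m2.
    assert (hdk : 0 < d * k) by (apply Rmult_lt_0_compat; lra).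
    assert (e1 : 0 <= d * k * (Phi (xi + 1) - ym))
      by (apply Rmult_le_pos; lra).
    assert (e2 : d * (0 - ym) <= d * (Phi (xi - 1) - ym))
      by (apply Rmult_le_compat_l; lra).
    assert (E : d * (k * Phi (xi + 1) - (k + 1) * ym + Phi (xi - 1))
       = d * k * (Phi (xi + 1) - ym) + d * (Phi (xi - 1) - ym)) by ring.
    rewrite E in HE. assert (d * (0 - ym) = - (d * ym)) by ring. lra. }
  split; [exact P1|]. split; [exact P2|].
  intros d c Phi Hd Hs.
  assert (Rmin dm dp <= dm) by apply Rmin_l.
  assert (Rmin dm dp <= dp) by apply Rmin_r.
  assert (0 <= c) by (apply (P1 d c Phi); [lra|exact Hs]).
  assert (c <= 0) by (apply (P2 d c Phi); [lra|exact Hs]).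
  lra.
Qed.
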